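(* Let $N>0$, $m>0$, $w\geq 0$, $\alpha>0$ and let $y,t,L,L_g,g$ be real numbers with $L+L_g>0$. Let $p:[0,N]\to(0,\infty)$ be an integrable function that attains its maximum and its minimum on $[0,N]$, and suppose that for every $i\in[0,N]$ \[ \int_0^N \ln\left[\frac{p(i)}{p(j)}\right]p(j)\,dj + \frac{p(i)-mw}{p(i)}\int_0^N p(j)\,dj = \alpha(y-t) + \frac{\alpha g}{L+L_g}\int_0^N p(j)\,dj . \] Then $p$ is constant on $[0,N]$, i.e. there is $p_0$ with $p(i)=p_0$ for all $i\in[0,N]$.
   Context: This is the first-order condition for profit maximization of firm $i$ in a monopolistic-competition model with a continuum $[0,N]$ of firms, each producing one variety $i$ with labor input $l=F+mq$, nominal wage $w$, consumers with CARA partial utility $u(q)=k-\kappa e^{-\alpha q}$, income $y$, tax $t$, $L$ privately employed and $L_g$ governmentally employed workers, and a government purchase $g(i)=g$ of every variety $i$ (the same for all varieties). *)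

(* Defs.v *)
From HB Require Import structures.
From mathcomp Require Import all_boot all_order all_algebra.
From mathcomp Require Import all_classical all_reals all_analysis.
Set Implicit Arguments. Unset Strict Implicit. Unset Printing Implicit Defensive.

(* Main.v *)
Require Import Defs.
From HB Require Import structures.
From mathcomp Require Import all_boot all_order all_algebra.
From mathcomp Require Import all_classical all_reals all_analysis.
From mathcomp Require Import measurable_realfun.
From mathcomp Require Import lra.
Import Order.TTheory GRing.Theory Num.Theory.
Local Open Scope classical_set_scope.
Local Open Scope ring_scope.

Theorem proposition1 (R : realType) (N m w alpha y t L Lg g : R)
  (p : R -> R)
  (hN : 0 < N) (hm : 0 < m) (hw : 0 <= w) (halpha : 0 < alpha)
  (hL : 0 < L + Lg)
  (hpos : forall i, i \in `[0, N] -> 0 < p i)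
  (hint : (@lebesgue_measure R).-integrable `[0, N] (EFin \o p))
  (hmax : exists2 imax, imax \in `[0, N] &
            forall j, j \in `[0, N] -> p j <= p imax)
  (hmin : exists2 imin, imin \in `[0, N] &
            forall j, j \in `[0, N] -> p imin <= p j)
  (hfoc : forall i, i \in `[0, N] ->
     Rintegral (@lebesgue_measure R) `[0, N] (fun j => ln (p i / p j) * p j)
     + (p i - m * w) / p i * Rintegral (@lebesgue_measure R) `[0, N] p
     = alpha * (y - t)
       + alpha * g / (L + Lg) * Rintegral (@lebesgue_measure R) `[0, N] p) :
  exists p0 : R, forall i, i \in `[0, N] -> p i = p0.
Proof.
case: hmax => a aD ha; case: hmin => b bD hb.
set D := (`[0, N]%classic : set (measurableTypeR R)).
have mD : measurable D by exact: measurable_itv.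
have DE x : D x -> x \in `[0, N] by [].
have ED x : x \in `[0, N] -> D x by [].
have pa0 := hpos a aD; have pb0 := hpos b bD.
set P := Rintegral (@lebesgue_measure R) D p.
have mp : measurable_fun D p by apply/measurable_EFinP; exact: measurable_int hint.
have intc (c : R) : (@lebesgue_measure R).-integrable D (EFin \o cst c).
  apply: measurable_bounded_integrable => //.
    by change ((@lebesgue_measure R) [set` `[0,N]%R] < +oo)%E; rewrite lebesgue_measure_itv /= lte_fin hN ltry.
  by exists `|c|; split; rewrite ?num_real // => z zc x _ /=; apply/ltW.
have hP : 0 < P.
  have : Rintegral (@lebesgue_measure R) D (cst (p b)) <= P.
    apply: le_Rintegral => //; first exact: (intc (p b)).
  rewrite Rintegral_cst //; change (p b * fine ((@lebesgue_measure R) [set` `[0,N]%R]) <= P -> 0 < P).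
  rewrite lebesgue_measure_itv /= lte_fin hN /= subr0.
  by apply: lt_le_trans; rewrite mulr_gt0.
have intl : (@lebesgue_measure R).-integrable D (EFin \o (fun j => ln (p j) * p j)).
  have hg := integrableZl mD (`|ln (p a)| + `|ln (p b)|) hint.
  apply: (le_integrable mD); last exact: hg.
    apply/measurable_EFinP; apply: measurable_funM => //.
    exact: measurableT_comp (@measurable_ln R) mp.
  move=> x xD /=; have px := hpos _ (DE _ xD).
  rewrite lee_fin !normrM [`|p x|]gtr0_norm // [`|_ + _|]ger0_norm ?addr_ge0 //.
  apply: ler_wpM2r; first exact: ltW.
  have h1 : ln (p b) <= ln (p x) by rewrite ler_ln ?posrE // hb // DE.
  have h2 : ln (p x) <= ln (p a) by rewrite ler_ln ?posrE // ha // DE.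
  have n1 := normr_ge0 (ln (p a)); have n2 := normr_ge0 (ln (p b)).
  have n3 := ler_norm (ln (p a)); have n4 := ler_norm (- ln (p b)).
  rewrite normrN in n4.
  case: (lerP 0 (ln (p x))) => h.
    rewrite [`|ln (p x)|]ger0_norm //; lra.
  rewrite [`|ln (p x)|]ltr0_norm //; lra.
set Q := Rintegral (@lebesgue_measure R) D (fun j => ln (p j) * p j).
have key i : i \in `[0, N] ->
    Rintegral (@lebesgue_measure R) D (fun j => ln (p i / p j) * p j) = ln (p i) * P - Q.
  move=> iD; have pi0 := hpos _ iD.
  transitivity (Rintegral (@lebesgue_measure R) D (fun j => ln (p i) * p j + (- 1) * (ln (p j) * p j))).
    apply: eq_Rintegral => x; rewrite inE => /DE xD; rewrite ln_div ?posrE //; last exact: hpos.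
    lra.
  rewrite RintegralD //; last 2 first.
    exact: (integrableZl mD (ln (p i)) hint).
    exact: (integrableZl mD (-1) intl).
  by rewrite !RintegralZl // mulN1r.
have Ea := hfoc _ aD; have Eb := hfoc _ bD.
rewrite !key // in Ea Eb.
have hab : p a <= p b.
  rewrite leNgt; apply/negP => hlt.
  have l1 : ln (p b) < ln (p a) by rewrite ltr_ln ?posrE.
  have l2 : m * w / p a <= m * w / p b.
    apply: ler_wpM2l; first exact: mulr_ge0 (ltW hm) hw.
    by rewrite lef_pV2 ?posrE // ltW.
  have : (ln (p a) - ln (p b)) * P + (m * w / p b - m * w / p a) * P = 0.
    have e1 : (p a - m * w) / p a = 1 - m * w / p a by rewrite mulrBl divff ?gt_eqF.
    have e2 : (p b - m * w) / p b = 1 - m * w / p b by rewrite mulrBl divff ?gt_eqF.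
    rewrite e1 in Ea; rewrite e2 in Eb; rewrite !mulrBl in Ea Eb *; rewrite mul1r in Ea Eb; have eP : Rintegral (@lebesgue_measure R) `[0, N] p = P by []. rewrite eP in Ea Eb; lra.
  move=> E.
  have t1 : 0 < (ln (p a) - ln (p b)) * P by rewrite mulr_gt0 // subr_gt0.
  have t2 : 0 <= (m * w / p b - m * w / p a) * P by rewrite mulr_ge0 // ?subr_ge0 // ltW.
  lra.
exists (p a); move=> i iD; apply/eqP; rewrite eq_le ha //=.
by apply: le_trans hab (hb _ iD).
Qed.
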